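(* Consider the private bug bounty model described in the context, with given prizes $\boldsymbol v=(v^1,\dots,v^L)$, artificial-bug prizes $\boldsymbol v_a=(v_a^1,\dots,v_a^K)$ and artificial-bug complexities $\boldsymbol q_a=(q_a^1,\dots,q_a^K)$. Let $c^*$ denote the symmetric equilibrium threshold. If $\Psi(\underline c)\le \underline c$, then $c^*=\underline c$. If $\Psi(\overline c)\ge\overline c$, then $c^*=\overline c$. Otherwise, the symmetric equilibrium threshold $c^*=c^*(\boldsymbol v,\boldsymbol v_a,\boldsymbol q_a)$ is the unique solution $\hat c$ of $$\hat c=\Psi(\hat c;\boldsymbol v,\boldsymbol v_a,\boldsymbol q_a).$$
   Context: Private bug bounty model. There are $L$ potential organic bugs $l=1,\dots,L$; bug $l$ exists with probability $\mu^l\in(0,1]$, independently across bugs, and has complexity $q^l\in(0,1]$. There are $n$ risk-neutral agents. Agent $i$ has a private search cost $c_i$, drawn i.i.d. across agents from a distribution $F$ with support $[\underline c,\overline c]$, where $-\infty\le\underline c<\overline c\le\infty$ and $\overline c>0$; $F$ is continuous, has full support, has a finite density $f$, and $F/f$ is non-decreasing. The designer sets prizes $v^l\ge0$ for the organic bugs and inserts $K$ artificial bugs (which exist with certainty) with prizes $v_a^k\ge0$ and complexities $q_a^k\in[0,1]$. Each agent chooses whether to search, paying $c_i$ if so. A searching agent finds each existing bug of complexity $q$ with probability $q$, independently across agents and bugs; the prize of each found bug is paid to one of the agents who found it, chosen uniformly at random. For a threshold $\hat c$, $\Phi(\hat c;q)$ denotes the probability that a searching agent wins the prize of an existing bug of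 complexity $q$ when each of the other $n-1$ agents searches if and only if his/her cost is at most $\hat c$. Define $\Psi(\hat c;\boldsymbol v,\boldsymbol v_a,\boldsymbol q_a)=\sum_l v^l\mu^l\Phi(\hat c;q^l)+\sum_k v_a^k\Phi(\hat c;q_a^k)$ (written $\Psi(\hat c)$ when the prizes are fixed). A threshold strategy $\hat c$ means: search if and only if own cost is at most $\hat c$. The symmetric equilibrium threshold is the common threshold used by all agents in a symmetric Bayes–Nash equilibrium. *)

(* Defs.v *)
From HB Require Import structures.
From mathcomp Require Import all_boot all_order all_algebra.
From mathcomp Require Import all_classical all_reals all_analysis.
Set Implicit Arguments. Unset Strict Implicit. Unset Printing Implicit Defensive.
Import Order.TTheory GRing.Theory Num.Theory.
Import numFieldNormedType.Exports.
Local Open Scope classical_set_scope.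
Local Open Scope ring_scope.

Section BugBounty.
Variable R : realType.

(* Probability that a given other agent searches when all others use the
   threshold t (t may be an extended real: -oo = nobody searches,
   +oo = everybody searches). *)
Definition search_prob (F : R -> R) (t : \bar R) : R :=
  match t with
  | r%:E => F r
  | +oo%E => 1
  | -oo%E => 0
  end.

(* Phi(t; q): probability that a searching agent wins the prize of an
   existing bug of complexity q, when each of the other n-1 agents searches
   iff his cost is <= t.  The agent finds the bug w.p. q; each other agent
   finds it independently w.p. q*F(t); if k others found it, the prize goes
   to him w.p. 1/(k+1). *)
Definition Phi (n : nat) (F : R -> R) (t : \bar R) (q : R) : R :=
  let p := q * search_prob F t in
  \sum_(k < n) ('C(n.-1, k))%:R * p ^+ k * (1 - p) ^+ (n.-1 - k)
                 * (q / (k.+1)%:R).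

Definition Psi (n L K : nat) (F : R -> R) (mu ql v : 'I_L -> R)
  (va qa : 'I_K -> R) (t : \bar R) : R :=
  \sum_(l < L) v l * mu l * Phi n F t (ql l)
  + \sum_(k < K) va k * Phi n F t (qa k).

Definition cost_distribution (cl cu : \bar R) (F f : R -> R) : Prop :=
  [/\ (cl < cu)%E /\ (0%:E < cu)%E,
      continuous F /\ (forall x y, x <= y -> F x <= F y) /\
      (F x @[x --> -oo] --> (0:R)) /\ (F x @[x --> +oo] --> (1:R)),
      (forall x : R, (x%:E <= cl)%E -> F x = 0) /\
      (forall x : R, (cu <= x%:E)%E -> F x = 1),
      (forall x y : R, (cl <= x%:E)%E -> (y%:E <= cu)%E -> x < y -> F x < F y) &
      [/\ (forall x, 0 <= f x), measurable_fun setT f,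
          (forall x : R, (F x)%:E =
              (\int[@lebesgue_measure R]_(t in [set t : R | (t <= x)%R]) (f t)%:E)%E) &
          (* F / f non-decreasing on the support *)
          (forall x y : R, (cl < x%:E)%E -> (y%:E < cu)%E -> x <= y ->
              F x * f y <= F y * f x)]].

(* Interim expected payoff of an agent with cost c who searches, when all
   other agents use the threshold t (not searching yields 0). *)
Definition search_payoff (n L K : nat) (F : R -> R) (mu ql v : 'I_L -> R)
  (va qa : 'I_K -> R) (t : \bar R) (c : R) : R :=
  Psi n F mu ql v va qa t - c.

(* t is a symmetric Bayes-Nash equilibrium threshold: t lies in the
   (closed, extended) support and, when all others use threshold t, the
   threshold rule "search iff c <= t" is a best response for every cost type
   c in the interior of the support (the endpoints have probability 0). *)
Definition sym_eq_threshold (n L K : nat) (cl cu : \bar R) (F : R -> R)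
  (mu ql v : 'I_L -> R) (va qa : 'I_K -> R) (t : \bar R) : Prop :=
  (cl <= t)%E /\ (t <= cu)%E /\
  forall c : R, (cl < c%:E)%E -> (c%:E < cu)%E ->
    ((c%:E <= t)%E -> 0 <= search_payoff n F mu ql v va qa t c) /\
    ((t < c%:E)%E -> search_payoff n F mu ql v va qa t c <= 0).

End BugBounty.

(* Main.v *)
Require Import Defs.
From HB Require Import structures.
From mathcomp Require Import all_boot all_order all_algebra.
From mathcomp Require Import all_classical all_reals all_analysis.
From mathcomp Require Import ring lra.
Import Order.TTheory GRing.Theory Num.Theory.
Import numFieldNormedType.Exports.
Local Open Scope ring_scope.

Section Aux.
Variable R : realType.

Definition phi (n : nat) (q p : R) : R :=
  \sum_(k < n) ('C(n.-1, k))%:R * p ^+ k * (1 - p) ^+ (n.-1 - k)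
                 * (q / (k.+1)%:R).

Lemma Phi_phi n (F : R -> R) t q : Phi n F t q = phi n q (q * search_prob F t).
Proof. by []. Qed.

Lemma phi_closed n q p : (0 < n)%N ->
  phi n q p = q / n%:R * \sum_(j < n) (1 - p) ^+ j.
Proof.
case: n => // m _; rewrite /phi /=.
have key : \sum_(k < m.+1) ('C(m.+1, k.+1))%:R * p ^+ k * (1 - p) ^+ (m - k)
    = \sum_(j < m.+1) (1 - p) ^+ j.
  have [->|p0] := eqVneq p 0.
    rewrite big_ord_recl /= expr0 subr0 expr1n mulr1 big1; last first.
      by move=> i _; rewrite expr0n /= mulr0 mul0r.
    rewrite addr0 bin1 (eq_bigr (fun=> 1)); last by move=> *; rewrite expr1n.
    by rewrite mulr1 -(big_mkord xpredT (fun=>1)) sumr_const_nat subn0.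
  apply: (mulfI p0); rewrite !mulr_sumr.
  have e1 : 1 = (1 - p + p) ^+ m.+1 by rewrite subrK expr1n.
  have e2 : \sum_(i < m.+1) p * (1 - p) ^+ i = 1 - (1 - p) ^+ m.+1.
    have := subrXX 1 (1 - p) m.+1.
    rewrite expr1n opprB addrCA subrr addr0 => ->.
    by rewrite mulr_sumr; apply: eq_bigr => i _; rewrite expr1n mul1r.
  rewrite e2; have -> : 1 - (1 - p) ^+ m.+1 = (1 - p + p) ^+ m.+1 - (1-p)^+m.+1 by rewrite subrK expr1n.
  rewrite exprDn [in RHS]big_ord_recl /= subn0 expr0 mulr1 bin0 mulr1n.
  rewrite addrAC subrr add0r; apply: eq_bigr => i _.
  rewrite subSS /bump /= add1n exprS -mulr_natr; lra.
rewrite -key mulr_sumr; apply: eq_bigr => k _.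
have hb : (m.+1%:R * ('C(m, k))%:R : R) = (k.+1)%:R * ('C(m.+1, k.+1))%:R.
  by rewrite -!natrM -(mul_bin_diag m.+1 k).
have h1 : (m.+1%:R : R) != 0 by rewrite pnatr_eq0.
have h2 : ((k.+1)%:R : R) != 0 by rewrite pnatr_eq0.
apply: (mulfI h1); apply: (mulfI h2).
rewrite !mulrA.
have -> : (k.+1)%:R * m.+1%:R * ('C(m, k))%:R = (k.+1)%:R * (k.+1)%:R * ('C(m.+1, k.+1))%:R :> R.
  by rewrite -mulrA hb mulrA.
field; by apply/andP; split; rewrite addrC natr1 pnatr_eq0.
Qed.

Lemma phi_anti n q p1 p2 : (0 < n)%N -> 0 <= q -> 0 <= p1 -> p1 <= p2 -> p2 <= 1 ->
  phi n q p2 <= phi n q p1.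
Proof.
move=> n0 q0 h1 h2 h3; rewrite !phi_closed //.
apply: ler_wpM2l; first by rewrite divr_ge0.
apply: ler_sum => j _; apply: lerXn2r; rewrite ?nnegrE; lra.
Qed.

Lemma phi_bounds n q p : (0 < n)%N -> 0 <= q -> 0 <= p <= 1 ->
  0 <= phi n q p <= q.
Proof.
move=> n0 q0 /andP[h1 h2]; rewrite !phi_closed //; apply/andP; split.
  apply: mulr_ge0; first by rewrite divr_ge0.
  by apply: sumr_ge0 => j _; apply: exprn_ge0; lra.
have hs : \sum_(j < n) (1 - p) ^+ j <= n%:R.
  rewrite -[X in _ <= X%:R]card_ord -sumr_const.
  by apply: ler_sum => j _; apply: exprn_ile1; lra.
have hn : (0 : R) < n%:R by rewrite ltr0n.
apply: (le_trans (ler_wpM2l _ hs)); first by rewrite divr_ge0.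
by rewrite mulrAC -mulrA divff ?mulr1 // gt_eqF.
Qed.

Lemma cont_add0 (g h : R -> R) : continuous g -> continuous h ->
  continuous (fun x => g x + h x).
Proof. move=> hg hh x; exact: (@continuousD _ _ _ g h x (hg x) (hh x)). Qed.

Lemma cont_sum (I : Type) (r : seq I) (g : I -> R -> R) :
  (forall i, continuous (g i)) -> continuous (fun x => \sum_(i <- r) g i x).
Proof.
move=> hg; elim: r => [|a r IH].
  by under eq_fun do rewrite big_nil; exact: cst_continuous.
under eq_fun do rewrite big_cons.
exact: cont_add0.
Qed.

Lemma cont_mul (g h : R -> R) : continuous g -> continuous h ->
  continuous (fun x => g x * h x).
Proof. move=> hg hh x; exact: (@continuousM _ _ g h x (hg x) (hh x)). Qed.

Lemma cont_add (g h : R -> R) : continuous g -> continuous h ->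
  continuous (fun x => g x + h x).
Proof. move=> hg hh x; exact: (@continuousD _ _ _ g h x (hg x) (hh x)). Qed.

Lemma cont_opp (g : R -> R) : continuous g -> continuous (fun x => - g x).
Proof. move=> hg x; exact: (@continuousN _ _ _ g x (hg x)). Qed.

Lemma cont_pow (g : R -> R) j : continuous g -> continuous (fun x => g x ^+ j).
Proof.
move=> hg; elim: j => [|j IH].
  rewrite (_ : (fun x => g x ^+ 0) = fun=> 1); first exact: cst_continuous.
  by apply: funext => y; rewrite expr0.
rewrite (_ : (fun x => g x ^+ j.+1) = fun x => g x * g x ^+ j); first exact: cont_mul.
by apply: funext => y; rewrite exprS.
Qed.

Lemma cont_phi n q (F : R -> R) : (0 < n)%N -> continuous F ->
  continuous (fun x => phi n q (q * F x)).
Proof.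
move=> n0 hF; under eq_fun do rewrite phi_closed //.
apply: cont_mul; first exact: cst_continuous.
apply: (@cont_sum 'I_n (index_enum _) (fun j x => (1 - q * F x) ^+ j)) => j.
apply: cont_pow; apply: (@cont_add (fun=> 1)); first exact: cst_continuous.
apply: cont_opp; apply: (@cont_mul (fun=> q)) => //; exact: cst_continuous.
Qed.


Lemma F_bounds cl cu (F f : R -> R) : cost_distribution cl cu F f ->
  forall x, 0 <= F x <= 1.
Proof.
case=> _ [_ [Fmono [_ Fp]]] _ _ [f0 _ Fint _] x.
apply/andP; split.
  by rewrite -lee_fin Fint; apply: integral_ge0 => t _; rewrite lee_fin f0.
have L : lim ((F x @[x --> +oo])%classic) = 1 by apply: cvg_lim.
suff : F x <= lim ((F x @[x --> +oo])%classic) by rewrite L.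
apply: limr_ge; first by apply/cvg_ex; exists 1.
near=> y; apply: Fmono; near: y; exact: nbhs_pinfty_ge (num_real x).
Unshelve. all: end_near.
Qed.

Lemma sp_bounds (F : R -> R) t : (forall x, 0 <= F x <= 1) ->
  0 <= search_prob F t <= 1.
Proof. by move=> Fb; case: t => [r||] //=; rewrite ?lexx ?ler01. Qed.

Lemma sp_mono cl cu (F f : R -> R) t1 t2 : cost_distribution cl cu F f ->
  (t1 <= t2)%E -> search_prob F t1 <= search_prob F t2.
Proof.
move=> cd; have Fb := @F_bounds cl cu F f cd.
case: cd => _ [_ [Fmono _]] _ _ _.
case: t1 => [r||]; case: t2 => [s||] //=; rewrite ?lee_fin; try by case/andP: (Fb r).
- exact: Fmono.
- by move=> _; case/andP: (Fb s).
Qed.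


Lemma Psi_anti (n L K : nat) (F : R -> R) (mu ql v : 'I_L -> R) (va qa : 'I_K -> R) t1 t2 :
  (0 < n)%N ->
  (forall l, 0 < mu l <= 1) -> (forall l, 0 < ql l <= 1) ->
  (forall l, 0 <= v l) -> (forall k, 0 <= va k) -> (forall k, 0 <= qa k <= 1) ->
  (forall x, 0 <= F x <= 1) ->
  search_prob F t1 <= search_prob F t2 ->
  Psi n F mu ql v va qa t2 <= Psi n F mu ql v va qa t1.
Proof.
move=> n0 hmu hql hv hva hqa Fb hs.
have /andP[s10 s11] : 0 <= search_prob F t1 <= 1 by exact: sp_bounds.
have /andP[s20 s21] : 0 <= search_prob F t2 <= 1 by exact: sp_bounds.
have key q : 0 <= q <= 1 -> Phi n F t2 q <= Phi n F t1 q.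
  case/andP=> q0 q1; rewrite !Phi_phi; apply: phi_anti => //.
  - exact: mulr_ge0.
  - exact: ler_wpM2l.
  - exact: mulr_ile1.
rewrite /Psi; apply: lerD; apply: ler_sum => i _.
  apply: ler_wpM2l; last by apply: key; case/andP: (hql i) => a b; rewrite b ltW.
  by apply: mulr_ge0; [exact: hv | case/andP: (hmu i) => a _; exact: ltW].
by apply: ler_wpM2l; [exact: hva | exact: key].
Qed.

Lemma Psi_bounds (n L K : nat) (F : R -> R) (mu ql v : 'I_L -> R) (va qa : 'I_K -> R) t :
  (0 < n)%N ->
  (forall l, 0 < mu l <= 1) -> (forall l, 0 < ql l <= 1) ->
  (forall l, 0 <= v l) -> (forall k, 0 <= va k) -> (forall k, 0 <= qa k <= 1) ->
  (forall x, 0 <= F x <= 1) ->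
  0 <= Psi n F mu ql v va qa t <=
    \sum_(l < L) v l * mu l * ql l + \sum_(k < K) va k * qa k.
Proof.
move=> n0 hmu hql hv hva hqa Fb.
have /andP[s0 s1] : 0 <= search_prob F t <= 1 by exact: sp_bounds.
have key q : 0 <= q <= 1 -> 0 <= Phi n F t q <= q.
  case/andP=> q0 q1; rewrite !Phi_phi; apply: phi_bounds => //.
  by rewrite mulr_ge0 //= mulr_ile1.
have hvm l : 0 <= v l * mu l.
  by apply: mulr_ge0; [exact: hv | case/andP: (hmu l) => a _; exact: ltW].
have hq l : 0 <= ql l <= 1 by case/andP: (hql l) => a b; rewrite b ltW.
rewrite /Psi; apply/andP; split.
  apply: addr_ge0; apply: sumr_ge0 => i _; apply: mulr_ge0 => //.
  - by case/andP: (key _ (hq i)).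
  - by case/andP: (key _ (hqa i)).
apply: lerD; apply: ler_sum => i _.
  by apply: ler_wpM2l => //; case/andP: (key _ (hq i)).
by apply: ler_wpM2l => //; case/andP: (key _ (hqa i)).
Qed.

Lemma Psi_cont (n L K : nat) (F : R -> R) (mu ql v : 'I_L -> R) (va qa : 'I_K -> R) :
  (0 < n)%N -> continuous F ->
  continuous (fun c : R => Psi n F mu ql v va qa c%:E).
Proof.
move=> n0 Fc; rewrite /Psi; apply: cont_add0.
  apply: (@cont_sum 'I_L (index_enum _) (fun l x => v l * mu l * Phi n F x%:E (ql l))) => l.
  apply: (@cont_mul (fun=> v l * mu l)); first exact: cst_continuous.
  exact: cont_phi.
apply: (@cont_sum 'I_K (index_enum _) (fun k x => va k * Phi n F x%:E (qa k))) => k.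
apply: (@cont_mul (fun=> va k)); first exact: cst_continuous.
exact: cont_phi.
Qed.


Lemma pick_between (x y : \bar R) : (x < y)%E ->
  exists c : R, (x < c%:E)%E /\ (c%:E < y)%E.
Proof.
case: x => [r||]; case: y => [s||] //= h.
- exists ((r + s) / 2); rewrite !lte_fin in h *; split; lra.
- by exists (r + 1); rewrite ltry lte_fin; split => //; lra.
- by exists (s - 1); rewrite ltNyr lte_fin; split => //; lra.
- by exists 0; rewrite ltNyr ltry.
Qed.

Lemma cont_id : continuous (fun x : R => x).
Proof. by move=> x; exact: cvg_id. Qed.

End Aux.

Theorem lemma1 (R : realType) (n L K : nat) (mu ql v : 'I_L -> R)
  (va qa : 'I_K -> R) (cl cu : \bar R) (F f : R -> R) :
  (0 < n)%N ->
  (forall l, 0 < mu l <= 1) -> (forall l, 0 < ql l <= 1) ->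
  (forall l, 0 <= v l) ->
  (forall k, 0 <= va k) -> (forall k, 0 <= qa k <= 1) ->
  cost_distribution cl cu F f ->
  let Psi_ := Psi n F mu ql v va qa in
  let eq_ := sym_eq_threshold n cl cu F mu ql v va qa in
  [/\ (forall c0 : R, cl = c0%:E -> Psi_ c0%:E <= c0 ->
         forall t, eq_ t <-> t = cl),
      (forall c1 : R, cu = c1%:E -> c1 <= Psi_ c1%:E ->
         forall t, eq_ t <-> t = cu) &
      ((~ exists c0 : R, cl = c0%:E /\ Psi_ c0%:E <= c0) ->
       (~ exists c1 : R, cu = c1%:E /\ c1 <= Psi_ c1%:E) ->
       exists c : R,
         [/\ (cl < c%:E)%E, (c%:E < cu)%E, c = Psi_ c%:E,
             (forall c' : R, c' = Psi_ c'%:E -> c' = c) &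
             (forall t, eq_ t <-> t = c%:E)])].
Proof.
move=> n0 hmu hql hv hva hqa cd Psi_ eq_.
have Fb := @F_bounds R cl cu F f cd.
have anti t1 t2 : (t1 <= t2)%E -> Psi_ t2 <= Psi_ t1.
  move=> h; apply: Psi_anti => //; exact: (@sp_mono R cl cu F f t1 t2 cd h).
have [[clcu cu0] [Fc _] _ _ _] := cd.
have eqP1 t : eq_ t -> [/\ (cl <= t)%E, (t <= cu)%E &
    forall c : R, (cl < c%:E)%E -> (c%:E < cu)%E ->
      ((c%:E <= t)%E -> c <= Psi_ t) /\ ((t < c%:E)%E -> Psi_ t <= c)].
  case=> h1 [h2 h3]; split => // c a b; have [h4 h5] := h3 c a b.
  by split => h; [rewrite -subr_ge0; exact: h4 | rewrite -subr_le0; exact: h5].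
have eqP2 t : [/\ (cl <= t)%E, (t <= cu)%E &
    forall c : R, (cl < c%:E)%E -> (c%:E < cu)%E ->
      ((c%:E <= t)%E -> c <= Psi_ t) /\ ((t < c%:E)%E -> Psi_ t <= c)] -> eq_ t.
  case=> h1 h2 h3; split => //; split => // c a b; have [h4 h5] := h3 c a b.
  by rewrite /search_payoff subr_ge0 subr_le0.
split.
- move=> c0 E hc0 t; split.
  + move/eqP1 => [h1 h2 h3]; apply/eqP; rewrite eq_le h1 andbT leNgt; apply/negP => ht.
    have [c [c1 c2]] : exists c : R, (cl < c%:E)%E /\ (c%:E < Order.min t cu)%E.
      by apply: pick_between; rewrite lt_min ht clcu.
    move: c2; rewrite lt_min => /andP[c2 c3].
    have [h4 _] := h3 c c1 c3.
    have := h4 (ltW c2); have := anti _ _ (ltW ht); rewrite E lte_fin in c1 *.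
    lra.
  + move=> ->; apply: eqP2; split => //; first exact: ltW.
    move=> c a b; split => h; first by have := lt_le_trans a h; rewrite ltxx.
    by move: a; rewrite E lte_fin; lra.
- move=> c1 E hc1 t; split.
  + move/eqP1 => [h1 h2 h3]; apply/eqP; rewrite eq_le h2 /= leNgt; apply/negP => ht.
    have [c [c2 c3]] : exists c : R, (Order.max t cl < c%:E)%E /\ (c%:E < cu)%E.
      by apply: pick_between; rewrite gt_max ht clcu.
    move: c2; rewrite gt_max => /andP[c2 c4].
    have [_ h5] := h3 c c4 c3.
    have := h5 c2; have := anti _ _ (ltW ht); rewrite E lte_fin in c3 *.
    lra.
  + move=> ->; apply: eqP2; split => //; first exact: ltW.
    move=> c a b; split => h; last by have := lt_trans b h; rewrite ltxx.
    by move: b; rewrite E lte_fin; lra.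
move=> N1 N2.
set B := \sum_(l < L) v l * mu l * ql l + \sum_(k < K) va k * qa k.
have PB t : 0 <= Psi_ t <= B by apply: Psi_bounds.
have [a [ha1 ha2]] : exists a : R, (cl <= a%:E)%E /\ a < Psi_ a%:E.
  case E: cl => [c0||].
  - exists c0; split => //; rewrite ltNge; apply/negP => h; apply: N1; by exists c0.
  - by move: clcu; rewrite E => /lt_le_trans/(_ (leey cu)); rewrite ltxx.
  - exists (-1); split; first by rewrite leNye.
    by case/andP: (PB (-1)%:E) => h _; lra.
have [b [hb1 hb2]] : exists b : R, (b%:E <= cu)%E /\ Psi_ b%:E < b.
  case E: cu => [c1||].
  - exists c1; split => //; rewrite ltNge; apply/negP => h; apply: N2; by exists c1.
  - exists (B + 1); split; first by rewrite leey.
    by case/andP: (PB (B + 1)%:E) => _ h; lra.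
  - by move: cu0; rewrite E => h; have := lt_le_trans h (leNye 0%:E); rewrite ltxx.
have hab : a < b.
  rewrite ltNge; apply/negP => hba.
  have := anti b%:E a%:E; rewrite lee_fin => /(_ hba); lra.
have hcont : continuous (fun c : R => Psi_ c%:E - c).
  apply: cont_add0; first exact: Psi_cont.
  apply: cont_opp; exact: cont_id.
have [c hcin hc] : exists2 c : R, c \in `[a, b] & Psi_ c%:E - c = 0.
  apply: IVT; first exact: ltW.
    exact: continuous_subspaceT.
  rewrite ge_min le_max; apply/andP; split; apply/orP; [right|left]; lra.
move: hcin; rewrite in_itv /= => /andP[hac hcb].
have Pc : Psi_ c%:E = c by lra.
have ac : a < c.
  rewrite lt_neqAle hac andbT; apply/eqP => hE; by move: ha2; rewrite hE Pc ltxx.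
have cb : c < b.
  rewrite lt_neqAle hcb andbT; apply/eqP => hE; by move: hb2; rewrite -hE Pc ltxx.
have clc : (cl < c%:E)%E by apply: le_lt_trans ha1 _; rewrite lte_fin.
have ccu : (c%:E < cu)%E by apply: lt_le_trans hb1; rewrite lte_fin.
exists c; split => //.
- move=> c' hc'; case: (ltgtP c' c) => // h.
  + have := anti c'%:E c%:E (ltW h); lra.
  + have := anti c%:E c'%:E (ltW h); lra.
move=> t; split.
- move/eqP1 => [h1 h2 h3]; case: (ltgtP t c%:E) => // htc.
  + have [d [d1 d2]] : exists d : R, (Order.max t cl < d%:E)%E /\ (d%:E < c%:E)%E.
      by apply: pick_between; rewrite gt_max htc clc.
    move: d1; rewrite gt_max => /andP[d1 d3].
    have [_ h5] := h3 d d3 (lt_trans d2 ccu).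
    have h6 := h5 d1; have h7 := anti _ _ (ltW htc); rewrite Pc in h7.
    rewrite lte_fin in d2.
    by have := le_lt_trans (le_trans h7 h6) d2; rewrite ltxx.
  + have [d [d1 d2]] : exists d : R, (c%:E < d%:E)%E /\ (d%:E < Order.min t cu)%E.
      by apply: pick_between; rewrite lt_min htc ccu.
    move: d2; rewrite lt_min => /andP[d2 d3].
    have [h4 _] := h3 d (lt_trans clc d1) d3.
    have h6 := h4 (ltW d2); have h7 := anti _ _ (ltW htc); rewrite Pc in h7.
    rewrite lte_fin in d1.
    by have := lt_le_trans d1 (le_trans h6 h7); rewrite ltxx.
- move=> ->; apply: eqP2; split; [exact: ltW | exact: ltW |].
  move=> d _ _; rewrite Pc lee_fin lte_fin; split; [by [] | exact: ltW].
Qed.
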